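(* Let $d_0,d_1,d_2\in\mathbb{C}$ and put $\alpha_0=1-2d_0+d_1+d_2$, $\alpha_1=1+d_0-2d_1+d_2$, $\alpha_2=1+d_0+d_1-2d_2$. Let $\tau_0,\tau_1,\tau_2$ be functions of one variable and $G_i(t_1,t_2)=(2t_2)^{d_i/2}\,\tau_i\big(t_1/\sqrt{2t_2}\big)$ ($i=0,1,2$). Then the system $$\Big(D_x^2-xD_x-\frac{\alpha_i-\alpha_{i+1}}{3}\Big)\tau_i\cdot\tau_{i+1}=0\quad(i=0,1,2)$$ is equivalent to the system $(D_{t_1}^2+D_{t_2})\,G_i\cdot G_{i+1}=0$ ($i=0,1,2$).
   Context: Indices mod 3. Hirota operators: $P(D)\,F\cdot G=P(\partial_y)(F(t+y)G(t-y))|_{y=0}$ in the respective variables, e.g. $D_xF\cdot G=F'G-FG'$, $D_x^2F\cdot G=F''G-2F'G'+FG''$. *)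

(* Defs.v *)
From Stdlib Require Import Reals.
From Coquelicot Require Import Coquelicot.

Open Scope R_scope.

Definition Cderiv (f : R -> C) (x : R) : C :=
  (Derive (fun y => Re (f y)) x, Derive (fun y => Im (f y)) x).

Definition Cderiv2 (f : R -> C) : R -> C := Cderiv (Cderiv f).

Definition twice_differentiable (f : R -> C) : Prop :=
  forall x : R,
    ex_derive (fun y => Re (f y)) x /\ ex_derive (fun y => Im (f y)) x /\
    ex_derive (fun y => Re (Cderiv f y)) x /\ ex_derive (fun y => Im (Cderiv f y)) x.

Open Scope C_scope.

Definition HD1 (f g : R -> C) (x : R) : C :=
  Cderiv f x * g x - f x * Cderiv g x.
Definition HD2 (f g : R -> C) (x : R) : C :=
  Cderiv2 f x * g x - 2 * (Cderiv f x * Cderiv g x) + f x * Cderiv2 g x.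

Definition pd1 (G : R -> R -> C) (t1 t2 : R) : C := Cderiv (fun s => G s t2) t1.
Definition pd11 (G : R -> R -> C) (t1 t2 : R) : C := Cderiv2 (fun s => G s t2) t1.
Definition pd2 (G : R -> R -> C) (t1 t2 : R) : C := Cderiv (fun s => G t1 s) t2.

Definition HDt1sq (G H : R -> R -> C) (t1 t2 : R) : C :=
  pd11 G t1 t2 * H t1 t2 - 2 * (pd1 G t1 t2 * pd1 H t1 t2) + G t1 t2 * pd11 H t1 t2.
Definition HDt2 (G H : R -> R -> C) (t1 t2 : R) : C :=
  pd2 G t1 t2 * H t1 t2 - G t1 t2 * pd2 H t1 t2.

(* Complex power of a positive real: r^z := exp(z ln r) (principal branch). *)
Definition cpowR (r : R) (z : C) : C :=
  ((exp (Re z * ln r) * cos (Im z * ln r))%R,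
   (exp (Re z * ln r) * sin (Im z * ln r))%R).

(* G(t1,t2) = (2 t2)^{d/2} tau(t1 / sqrt(2 t2)), meaningful for t2 > 0. *)
Definition Gfun (d : C) (tau : R -> C) (t1 t2 : R) : C :=
  cpowR (2 * t2)%R (d / 2) * tau (t1 / sqrt (2 * t2))%R.

(* Main.v *)
Require Import Defs.
From Stdlib Require Import Reals Lra FunctionalExtensionality.
From Coquelicot Require Import Coquelicot.
Open Scope C_scope.

Lemma Rd_mult (f g : R -> R) x a b : is_derive f x a -> is_derive g x b ->
  is_derive (fun y => f y * g y)%R x (a * g x + f x * b)%R.
Proof.
  rewrite !is_derive_Reals. intros. pose proof (derivable_pt_lim_mult f g x a b H H0).
  replace (a * g x + f x * b)%R with (a * g x + f x * b)%R by ring. exact H1.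
Qed.
Lemma Rd_plus (f g : R -> R) x a b : is_derive f x a -> is_derive g x b ->
  is_derive (fun y => f y + g y)%R x (a + b)%R.
Proof. rewrite !is_derive_Reals. intros. now apply derivable_pt_lim_plus. Qed.
Lemma Rd_minus (f g : R -> R) x a b : is_derive f x a -> is_derive g x b ->
  is_derive (fun y => f y - g y)%R x (a - b)%R.
Proof. rewrite !is_derive_Reals. intros. now apply derivable_pt_lim_minus. Qed.

Definition CD (f : R -> C) (x : R) (l : C) : Prop :=
  is_derive (fun y => Re (f y)) x (Re l) /\ is_derive (fun y => Im (f y)) x (Im l).

Lemma CD_Cderiv f x l : CD f x l -> Cderiv f x = l.
Proof.
  intros [H1 H2]. unfold Cderiv. destruct l; simpl in *; f_equal; apply is_derive_unique; assumption.
Qed.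

Lemma CD_of_ex f x : ex_derive (fun y => Re (f y)) x -> ex_derive (fun y => Im (f y)) x ->
  CD f x (Cderiv f x).
Proof. intros H1 H2; split; apply Derive_correct; assumption. Qed.

Lemma CD_ext f g x l : (forall y, f y = g y) -> CD f x l -> CD g x l.
Proof.
  intros E [H1 H2]; split; eapply is_derive_ext; try eassumption; intros; simpl; now rewrite E.
Qed.

Lemma CD_mul f g x a b : CD f x a -> CD g x b -> CD (fun y => f y * g y) x (a * g x + f x * b).
Proof.
  intros [Hf1 Hf2] [Hg1 Hg2]. split.
  - eapply is_derive_ext. intro t. symmetry. apply re_mult.
    replace (Re (a * g x + f x * b)) with
      (Re a * Re (g x) + Re (f x) * Re b - (Im a * Im (g x) + Im (f x) * Im b))%R
      by (destruct a, b, (f x), (g x); simpl; ring).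
    apply Rd_minus; apply Rd_mult; auto.
  - eapply is_derive_ext. intro t. symmetry. apply im_mult.
    replace (Im (a * g x + f x * b)) with
      (Re a * Im (g x) + Re (f x) * Im b + (Im a * Re (g x) + Im (f x) * Re b))%R
      by (destruct a, b, (f x), (g x); simpl; ring).
    apply Rd_plus; apply Rd_mult; auto.
Qed.

Lemma CD_const (c : C) x : CD (fun _ => c) x 0.
Proof. split; simpl; auto_derive; auto. Qed.

Lemma CD_comp (tau : R -> C) (u : R -> R) x a b :
  CD tau (u x) a -> is_derive u x b -> CD (fun y => tau (u y)) x (a * RtoC b).
Proof.
  intros [H1 H2] Hu. rewrite is_derive_Reals in H1, H2, Hu. split.
  - replace (Re (a * RtoC b)) with (Re a * b)%R by (destruct a; simpl; ring).
    apply is_derive_Reals.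
    exact (derivable_pt_lim_comp u (fun y => Re (tau y)) x b (Re a) Hu H1).
  - replace (Im (a * RtoC b)) with (Im a * b)%R by (destruct a; simpl; ring).
    apply is_derive_Reals.
    exact (derivable_pt_lim_comp u (fun y => Im (tau y)) x b (Im a) Hu H2).
Qed.

Lemma CD_cpow (c : C) t : (0 < t)%R ->
  CD (fun y => cpowR (2 * y) c) t (c * cpowR (2 * t) c * RtoC (/ t)).
Proof.
  intros Ht. destruct c as [a b]. unfold cpowR; split; simpl.
  - auto_derive. repeat split; lra. field. lra.
  - auto_derive. repeat split; lra. field. lra.
Qed.

Lemma Rd_div x s : is_derive (fun y => y / s)%R x (/ s)%R.
Proof. unfold Rdiv. auto_derive. auto. ring. Qed.

Lemma Rd_isq t1 t : (0 < t)%R ->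
  is_derive (fun y => t1 / sqrt (2 * y))%R t (- (t1 / sqrt (2 * t)) / (2 * t))%R.
Proof.
  intros Ht. assert (Hs : (0 < sqrt (2 * t))%R) by (apply sqrt_lt_R0; lra).
  assert (Hs2 : (sqrt (2 * t) * sqrt (2 * t) = 2 * t)%R) by (apply sqrt_sqrt; lra).
  auto_derive. lra. rewrite Hs2. field. lra.
Qed.

Lemma CD_val f x l l' : CD f x l -> l = l' -> CD f x l'.
Proof. intros H ->; exact H. Qed.

Lemma CD_tau tau x : twice_differentiable tau -> CD tau x (Cderiv tau x).
Proof. intros h; destruct (h x) as [A [B _]]; apply CD_of_ex; auto. Qed.

Lemma CD_tau' tau x : twice_differentiable tau -> CD (Cderiv tau) x (Cderiv2 tau x).
Proof. intros h; destruct (h x) as [_ [_ [A B]]]; apply CD_of_ex; auto. Qed.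

Lemma pd1_eq d tau (h : twice_differentiable tau) t1 t2 :
  pd1 (Gfun d tau) t1 t2 =
  cpowR (2 * t2) (d / 2) * (Cderiv tau (t1 / sqrt (2 * t2))%R * RtoC (/ sqrt (2 * t2))).
Proof.
  unfold pd1, Gfun. apply CD_Cderiv.
  eapply CD_val.
  - apply (CD_mul (fun _ => cpowR (2 * t2) (d / 2)) (fun y => tau (y / sqrt (2 * t2))%R)).
    + apply CD_const.
    + apply (CD_comp tau (fun y => y / sqrt (2 * t2))%R). apply CD_tau; auto. apply Rd_div.
  - ring.
Qed.

Lemma pd11_eq d tau (h : twice_differentiable tau) t1 t2 :
  pd11 (Gfun d tau) t1 t2 =
  cpowR (2 * t2) (d / 2) * (Cderiv2 tau (t1 / sqrt (2 * t2))%R * RtoC (/ sqrt (2 * t2))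
     * RtoC (/ sqrt (2 * t2))).
Proof.
  unfold pd11, Cderiv2.
  replace (Cderiv (fun s : R => Gfun d tau s t2)) with
    (fun y => cpowR (2 * t2) (d / 2) * (Cderiv tau (y / sqrt (2 * t2))%R * RtoC (/ sqrt (2 * t2)))).
  2:{ apply functional_extensionality; intro y. symmetry. apply (pd1_eq d tau h y t2). }
  apply CD_Cderiv.
  eapply CD_val.
  - apply (CD_mul (fun _ => cpowR (2 * t2) (d / 2))
       (fun y => Cderiv tau (y / sqrt (2 * t2))%R * RtoC (/ sqrt (2 * t2)))).
    + apply CD_const.
    + apply (CD_mul (fun y => Cderiv tau (y / sqrt (2 * t2))%R) (fun _ => RtoC (/ sqrt (2 * t2)))).
      * apply (CD_comp (Cderiv tau) (fun y => y / sqrt (2 * t2))%R). apply CD_tau'; auto. apply Rd_div.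
      * apply CD_const.
  - unfold Cderiv2; ring.
Qed.

Lemma pd2_eq d tau (h : twice_differentiable tau) t1 t2 : (0 < t2)%R ->
  pd2 (Gfun d tau) t1 t2 =
  d / 2 * cpowR (2 * t2) (d / 2) * RtoC (/ t2) * tau (t1 / sqrt (2 * t2))%R
  + cpowR (2 * t2) (d / 2) * (Cderiv tau (t1 / sqrt (2 * t2))%R
      * RtoC (- (t1 / sqrt (2 * t2)) / (2 * t2))%R).
Proof.
  intros Ht. unfold pd2, Gfun. apply CD_Cderiv.
  apply (CD_mul (fun y => cpowR (2 * y) (d / 2)) (fun y => tau (t1 / sqrt (2 * y))%R)).
  - apply CD_cpow; auto.
  - apply (CD_comp tau (fun y => t1 / sqrt (2 * y))%R). apply CD_tau; auto. apply Rd_isq; auto.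
Qed.

Lemma key di dj ti tj (hi : twice_differentiable ti) (hj : twice_differentiable tj) t1 t2 :
  (0 < t2)%R ->
  HDt1sq (Gfun di ti) (Gfun dj tj) t1 t2 + HDt2 (Gfun di ti) (Gfun dj tj) t1 t2 =
  cpowR (2 * t2) (di / 2) * cpowR (2 * t2) (dj / 2) * RtoC (/ (2 * t2)) *
  (HD2 ti tj (t1 / sqrt (2 * t2))%R - RtoC (t1 / sqrt (2 * t2))%R * HD1 ti tj (t1 / sqrt (2 * t2))%R
   + (di - dj) * (ti (t1 / sqrt (2 * t2))%R * tj (t1 / sqrt (2 * t2))%R)).
Proof.
  intros Ht. assert (Hs : (0 < sqrt (2 * t2))%R) by (apply sqrt_lt_R0; lra).
  assert (Hs2 : (sqrt (2 * t2) * sqrt (2 * t2) = 2 * t2)%R) by (apply sqrt_sqrt; lra).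
  assert (R1 : (/ sqrt (2 * t2) * / sqrt (2 * t2) = / (2 * t2))%R).
  { rewrite <- Rinv_mult, Hs2. reflexivity. }
  unfold HDt1sq, HDt2.
  rewrite !pd11_eq, !pd1_eq, !pd2_eq; auto.
  unfold Gfun, HD2, HD1, Cderiv2.
  set (x := (t1 / sqrt (2 * t2))%R).
  assert (E1 : RtoC (/ t2) = 2 * (RtoC (/ sqrt (2 * t2)) * RtoC (/ sqrt (2 * t2)))).
  { unfold RtoC, Cmult; simpl. f_equal; [|ring]. rewrite R1. field. lra. }
  assert (E2 : RtoC (- x / (2 * t2))%R = - RtoC x * (RtoC (/ sqrt (2 * t2)) * RtoC (/ sqrt (2 * t2)))).
  { unfold RtoC, Cmult, Copp; simpl. f_equal; [|ring]. rewrite R1. unfold Rdiv. ring. }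
  assert (E3 : RtoC (/ (2 * t2)) = RtoC (/ sqrt (2 * t2)) * RtoC (/ sqrt (2 * t2))).
  { unfold RtoC, Cmult; simpl. f_equal; [|ring]. rewrite R1. ring. }
  rewrite E1, E2, E3. field.
Qed.

Lemma cpowR_neq0 r z : cpowR r z <> 0.
Proof.
  unfold cpowR. intro H. injection H as H1 H2.
  pose proof (exp_pos (Re z * ln r)) as He.
  apply Rmult_integral in H1; apply Rmult_integral in H2.
  destruct H1 as [H1|H1]; [lra|]. destruct H2 as [H2|H2]; [lra|].
  pose proof (sin2_cos2 (Im z * ln r)) as S. unfold Rsqr in S. rewrite H1, H2 in S. lra.
Qed.

Lemma RtoC_neq0 r : r <> 0%R -> RtoC r <> 0.
Proof. intros H E. injection E. auto. Qed.

Lemma conv1 (A B c T : C) : A - B - (-c) * T = A - B + c * T.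
Proof. ring. Qed.

Lemma cancel3 (p q k e : C) : p <> 0 -> q <> 0 -> k <> 0 -> p * q * k * e = 0 -> e = 0.
Proof.
  intros Hp Hq Hk H. destruct (Ceq_dec e 0) as [|He]; auto.
  exfalso. apply (Cmult_neq_0 (p * q * k) e); auto.
  repeat apply Cmult_neq_0; auto.
Qed.

Theorem proposition5p2 (d0 d1 d2 : C) (tau0 tau1 tau2 : R -> C)
  (h0 : twice_differentiable tau0) (h1 : twice_differentiable tau1)
  (h2 : twice_differentiable tau2) :
  let alpha0 := 1 - 2 * d0 + d1 + d2 in
  let alpha1 := 1 + d0 - 2 * d1 + d2 in
  let alpha2 := 1 + d0 + d1 - 2 * d2 in
  let G0 := Gfun d0 tau0 in
  let G1 := Gfun d1 tau1 in
  let G2 := Gfun d2 tau2 in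
  (forall x : R,
     HD2 tau0 tau1 x - RtoC x * HD1 tau0 tau1 x - (alpha0 - alpha1) / 3 * (tau0 x * tau1 x) = 0 /\
     HD2 tau1 tau2 x - RtoC x * HD1 tau1 tau2 x - (alpha1 - alpha2) / 3 * (tau1 x * tau2 x) = 0 /\
     HD2 tau2 tau0 x - RtoC x * HD1 tau2 tau0 x - (alpha2 - alpha0) / 3 * (tau2 x * tau0 x) = 0)
  <->
  (forall t1 t2 : R, (0 < t2)%R ->
     HDt1sq G0 G1 t1 t2 + HDt2 G0 G1 t1 t2 = 0 /\
     HDt1sq G1 G2 t1 t2 + HDt2 G1 G2 t1 t2 = 0 /\
     HDt1sq G2 G0 t1 t2 + HDt2 G2 G0 t1 t2 = 0).
Proof.
  intros alpha0 alpha1 alpha2 G0 G1 G2.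
  assert (Ea : (alpha0 - alpha1) / 3 = - (d0 - d1)) by (unfold alpha0, alpha1; field).
  assert (Eb : (alpha1 - alpha2) / 3 = - (d1 - d2)) by (unfold alpha1, alpha2; field).
  assert (Ec : (alpha2 - alpha0) / 3 = - (d2 - d0)) by (unfold alpha2, alpha0; field).
  rewrite Ea, Eb, Ec. unfold G0, G1, G2. split.
  - intros H t1 t2 Ht. rewrite !key by auto.
    destruct (H (t1 / sqrt (2 * t2))%R) as [A [B C0]].
    rewrite conv1 in A, B, C0. rewrite A, B, C0, !Cmult_0_r. auto.
  - intros H x. assert (Hp : (0 < / 2)%R) by lra.
    destruct (H x (/ 2)%R Hp) as [A [B C0]].
    rewrite key in A, B, C0 by auto.
    assert (Es : (x / sqrt (2 * / 2))%R = x).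
    { replace (2 * / 2)%R with 1%R by field. rewrite sqrt_1. field. }
    rewrite Es in A, B, C0. rewrite !conv1.
    assert (Hk : RtoC (/ (2 * / 2)) <> 0) by (apply RtoC_neq0; apply Rinv_neq_0_compat; lra).
    split; [|split].
    + exact (cancel3 _ _ _ _ (cpowR_neq0 _ _) (cpowR_neq0 _ _) Hk A).
    + exact (cancel3 _ _ _ _ (cpowR_neq0 _ _) (cpowR_neq0 _ _) Hk B).
    + exact (cancel3 _ _ _ _ (cpowR_neq0 _ _) (cpowR_neq0 _ _) Hk C0).
Qed.
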